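(* Let $A$ be a finite-dimensional algebra over a field $k$ and let $F^\bullet \in \mathcal{L}_A$. Then for every $k\in\mathbb{Z}$ the cohomology module $\mathrm{H}^k(F^\bullet)$ lies in ${}^\perp\mathcal{P}_A$, i.e. $\operatorname{Hom}_A(\mathrm{H}^k(F^\bullet), Z)=0$ for every projective-injective right $A$-module $Z$.
   Context: Conventions: $k$ is a field, $A$ a finite-dimensional $k$-algebra without semisimple direct summands; $\operatorname{mod}A$ is the category of finitely generated right $A$-modules, $\operatorname{proj}A$ the full subcategory of projectives; $(-)^\ast:=\operatorname{Hom}_A(-,A)$. $\mathcal{P}_A$ is the full subcategory of projective-injective modules and ${}^\perp\mathcal{P}_A$ the full subcategory of $X\in\operatorname{mod}A$ with $\operatorname{Hom}_A(X,Z)=0$ for all $Z\in\mathcal{P}_A$. $\mathrm{K}(\operatorname{proj}A)$ denotes the unbounded homotopy category of complexes of finitely generated projective right $A$-modules, written as cochain complexes $F^\bullet=(F^k,d^k:F^k\to F^{k+1})$ with cohomology $\mathrm{H}^k(F^\bullet)=\operatorname{Ker}d^k/\operatorname{Im}d^{k-1}$. Applying $(-)^\ast$ componentwise yields a complex of projective left modules written as a chain complex $F^\ast_\bullet$ with $F^\ast_k:=(F^k)^\ast$ and differential $(d^k)^\ast:F^\ast_{k+1}\to F^\ast_k$; its homology is $\mathrm{H}_k(F^\ast_\bullet)=\operatorname{Ker}((d^{k-1})^\ast)/\operatorname{Im}((d^k)^\ast)$. Kato's category: $\mathcal{L}_A=\{F^\bullet\in\mathrm{K}(\operatorname{proj}A)\mid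 \mathrm{H}^k(F^\bullet)=0 \text{ for all } k<0,\ \mathrm{H}_k(F^\ast_\bullet)=0\text{ for all }k\ge 0\}$. *)

(* Defs.v *)
From HB Require Import structures.
From mathcomp Require Import all_boot all_order all_algebra falgebra.
Set Implicit Arguments. Unset Strict Implicit. Unset Printing Implicit Defensive.
Import GRing.Theory.
Local Open Scope ring_scope.

Section Modules.
Variables (k : fieldType) (A : falgType k).

(* A finitely generated right A-module = a finite-dimensional k-vector space
   with a k-bilinear, unital, associative right action of A. *)
Record rmod := RMod {
  rcar :> vectType k;
  ract : rcar -> A -> rcar;
  ract_linl : forall (a : A) (c : k) (x y : rcar),
      ract (c *: x + y) a = c *: ract x a + ract y a;
  ract_linr : forall (x : rcar) (c : k) (a b : A),
      ract x (c *: a + b) = c *: ract x a + ract x b;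
  ract1 : forall x : rcar, ract x 1 = x;
  ractM : forall (x : rcar) (a b : A), ract (ract x a) b = ract x (a * b)
}.

Definition is_hom (M N : rmod) (f : M -> N) : Prop :=
  (forall (c : k) (x y : M), f (c *: x + y) = c *: f x + f y) /\
  (forall (x : M) (a : A), f (ract x a) = ract (f x) a).

Lemma regmod_linl (a : A) (c : k) (x y : A) :
  (c *: x + y) * a = c *: (x * a) + y * a.
Proof. by rewrite mulrDl scalerAl. Qed.
Lemma regmod_linr (x : A) (c : k) (a b : A) :
  x * (c *: a + b) = c *: (x * a) + x * b.
Proof. by rewrite mulrDr scalerAr. Qed.
Lemma regmod_1 (x : A) : x * 1 = x. Proof. exact: mulr1. Qed.
Lemma regmod_M (x a b : A) : x * a * b = x * (a * b).
Proof. by rewrite mulrA. Qed.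

Definition regmod : rmod :=
  @RMod A (fun x a => x * a) regmod_linl regmod_linr regmod_1 regmod_M.

Definition projective (P : rmod) : Prop :=
  forall (M N : rmod) (g : M -> N) (h : P -> N),
    is_hom g -> (forall y : N, exists x : M, g x = y) -> is_hom h ->
    exists l : P -> M, is_hom l /\ (forall x, g (l x) = h x).

Definition injective_mod (Z : rmod) : Prop :=
  forall (M N : rmod) (i : M -> N) (h : M -> Z),
    is_hom i -> injective i -> is_hom h ->
    exists e : N -> Z, is_hom e /\ (forall x, e (i x) = h x).

Record pcomplex := PComplex {
  cobj : int -> rmod;
  cdif : forall i : int, cobj i -> cobj (i + 1);
  cdif_hom : forall i, is_hom (@cdif i);
  cdif2 : forall i (x : cobj i), cdif (cdif x) = 0;
  cobj_proj : forall i, projective (cobj i)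
}.

(* H^(i+1)(F) = 0, i.e. Ker d^(i+1) = Im d^i *)
Definition cohom_zero (F : pcomplex) (i : int) : Prop :=
  forall x : cobj F (i + 1), cdif x = 0 -> exists y : cobj F i, cdif y = x.

(* H_(i+1)(F^dual) = 0, i.e. Ker((d^i)^dual) = Im((d^(i+1))^dual) in
   Hom_A(F^(i+1), A): every A-linear phi : F^(i+1) -> A with phi o d^i = 0
   is of the form psi o d^(i+1) for some A-linear psi : F^(i+2) -> A. *)
Definition dual_hom_zero (F : pcomplex) (i : int) : Prop :=
  forall phi : cobj F (i + 1) -> regmod, is_hom phi ->
    (forall y : cobj F i, phi (cdif y) = 0) ->
    exists psi : cobj F (i + 1 + 1) -> regmod,
      is_hom psi /\ (forall x, phi x = psi (cdif x)).

(* Kato's category L_A (indexing k = i + 1 ranges over all integers) *)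
Definition in_KatoL (F : pcomplex) : Prop :=
  (forall i : int, i + 1 < 0 -> cohom_zero F i) /\
  (forall i : int, 0 <= i + 1 -> dual_hom_zero F i).

(* Hom_A(H^(i+1)(F), Z) = 0, where H^(i+1)(F) = Ker d^(i+1) / Im d^i:
   an A-linear map Ker d^(i+1) -> Z (given by its values on the kernel)
   vanishing on Im d^i is zero. *)
Definition hom_cohom_zero (F : pcomplex) (i : int) (Z : rmod) : Prop :=
  forall g : cobj F (i + 1) -> Z,
    (forall (c : k) (x y : cobj F (i + 1)), cdif x = 0 -> cdif y = 0 ->
        g (c *: x + y) = c *: g x + g y) ->
    (forall (x : cobj F (i + 1)) (a : A), cdif x = 0 ->
        g (ract x a) = ract (g x) a) ->
    (forall y : cobj F i, g (cdif y) = 0) ->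
    forall x : cobj F (i + 1), cdif x = 0 -> g x = 0.

End Modules.

(* Main.v *)
Require Import Defs.
From HB Require Import structures.
From mathcomp Require Import all_boot all_order all_algebra falgebra.
Import GRing.Theory.
Local Open Scope ring_scope.

Section Aux.
Variables (k : fieldType) (A : falgType k).

Lemma dbl0 (V : zmodType) (v : V) : v = v + v -> v = 0.
Proof. by move=> H; apply: (@addrI _ v); rewrite addr0 -H. Qed.

Lemma hom0 {M N : rmod A} {f : M -> N} : is_hom f -> f 0 = 0.
Proof. by case=> lin _; apply: dbl0; rewrite -{2}[f 0]scale1r -lin scale1r addr0. Qed.

Lemma homD {M N : rmod A} {f : M -> N} x y : is_hom f -> f (x + y) = f x + f y.
Proof. by case=> lin _; have := lin 1 x y; rewrite !scale1r. Qed.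

Lemma homZ {M N : rmod A} {f : M -> N} c x : is_hom f -> f (c *: x) = c *: f x.
Proof.
move=> hf; have := (proj1 hf) c x 0; rewrite !addr0 => ->.
by rewrite (hom0 hf) addr0.
Qed.

Lemma ract0l (M : rmod A) (a : A) : ract (0 : M) a = 0.
Proof. by apply: dbl0; rewrite -{2}[ract 0 a]scale1r -ract_linl scale1r addr0. Qed.

Lemma ract0r (M : rmod A) (x : M) : ract x 0 = 0.
Proof. by apply: dbl0; rewrite -{2}[ract x 0]scale1r -ract_linr scale1r addr0. Qed.

Lemma ractDl (M : rmod A) (x y : M) a : ract (x + y) a = ract x a + ract y a.
Proof. by have := ract_linl a 1 x y; rewrite !scale1r. Qed.

Lemma ractZr (M : rmod A) (x : M) c a : ract x (c *: a) = c *: ract x a.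
Proof. by have := ract_linr x c a 0; rewrite !addr0 ract0r addr0. Qed.

Lemma ract_sum (M : rmod A) (I : Type) (r : seq I) (F : I -> M) a :
  ract (\sum_(j <- r) F j) a = \sum_(j <- r) ract (F j) a.
Proof.
elim: r => [|j r IH]; first by rewrite !big_nil ract0l.
by rewrite !big_cons ractDl IH.
Qed.

Section Free.
Variable n : nat.
Definition FT := {ffun 'I_n -> A}.
Definition fract (f : FT) (a : A) : FT := [ffun j => f j * a].
Lemma fract_linl a c (x y : FT) : fract (c *: x + y) a = c *: fract x a + fract y a.
Proof. by apply/ffunP => j; rewrite !ffunE mulrDl scalerAl. Qed.
Lemma fract_linr (x : FT) c (a b : A) : fract x (c *: a + b) = c *: fract x a + fract x b.
Proof. by apply/ffunP => j; rewrite !ffunE mulrDr scalerAr. Qed.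
Lemma fract1 (x : FT) : fract x 1 = x.
Proof. by apply/ffunP => j; rewrite !ffunE mulr1. Qed.
Lemma fractM (x : FT) a b : fract (fract x a) b = fract x (a * b).
Proof. by apply/ffunP => j; rewrite !ffunE mulrA. Qed.
Definition freemod : rmod A := @RMod _ _ FT fract fract_linl fract_linr fract1 fractM.
End Free.


Section Ker.
Variables (M N : rmod A) (f : M -> N) (hf : is_hom f).
Let flin : linear f. Proof. by move=> c x y; exact: (proj1 hf). Qed.
Definition fL : {linear M -> N} := HB.pack f (GRing.isLinear.Build _ _ _ _ f flin).
Definition KU := lker (linfun fL).
Lemma memKU x : (x \in KU) = (f x == 0).
Proof. by rewrite memv_ker lfunE. Qed.
Definition KT := subvs_of KU.
Lemma kerP (u : KT) : f (vsval u) = 0.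
Proof. by apply/eqP; rewrite -memKU subvsP. Qed.
Lemma ract_in (u : KT) a : ract (vsval u) a \in KU.
Proof. by rewrite memKU (proj2 hf) kerP ract0l. Qed.
Definition kract (u : KT) (a : A) : KT := vsproj KU (ract (vsval u) a).
Lemma kractE u a : vsval (kract u a) = ract (vsval u) a.
Proof. exact: vsprojK (ract_in u a). Qed.
Lemma kract_linl a c (x y : KT) : kract (c *: x + y) a = c *: kract x a + kract y a.
Proof. by apply: subvs_inj; rewrite linearP /= !kractE linearP ract_linl. Qed.
Lemma kract_linr (x : KT) c (a b : A) : kract x (c *: a + b) = c *: kract x a + kract x b.
Proof. by apply: subvs_inj; rewrite linearP /= !kractE ract_linr. Qed.
Lemma kract1 (x : KT) : kract x 1 = x.
Proof. by apply: subvs_inj; rewrite kractE ract1. Qed.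
Lemma kractM (x : KT) a b : kract (kract x a) b = kract x (a * b).
Proof. by apply: subvs_inj; rewrite !kractE ractM. Qed.
Definition kermod : rmod A := @RMod _ _ KT kract kract_linl kract_linr kract1 kractM.
Lemma incl_hom : is_hom (vsval : kermod -> M).
Proof. by split=> [c x y|x a]; rewrite /= ?kractE // linearP. Qed.
End Ker.

End Aux.
Arguments hom0 {k A M N f}.
Arguments freemod {k} A n.
Arguments FT {k} A n.
Arguments kermod {k A M N f} hf.
Arguments KU {k A M N f} hf.
Arguments memKU {k A M N f} hf x.
Arguments kerP {k A M N f} hf u.
Arguments incl_hom {k A M N f} hf.
Arguments kractE {k A M N f} hf u a.

Theorem mainTheorem1 (k : fieldType) (A : falgType k) (F : pcomplex A) :
  in_KatoL F ->
  forall (i : int) (Z : rmod A), projective Z -> injective_mod Z ->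
    hom_cohom_zero F i Z.
Proof.
move=> [Hneg Hpos] i Z projZ injZ g glin gA gim.
case: (Order.TotalTheory.ltP (i + 1) 0) => hi.
  by move=> x dx; have [y <-] := Hneg i hi x dx; exact: gim.
pose n := \dim (fullv : {vspace Z}).
pose b (j : 'I_n) : Z := (vbasis fullv)`_j.
pose s : freemod A n -> Z := fun f => \sum_(j < n) ract (b j) (f j).
have hs : is_hom s.
  split.
    move=> c x y; rewrite /s scaler_sumr -big_split; apply: eq_bigr => j _ /=.
    by rewrite !ffunE ract_linr.
  move=> x a; rewrite /s ract_sum; apply: eq_bigr => j _ /=.
  by rewrite ffunE ractM.
have ssurj : forall z, exists f, s f = z.
  move=> z; exists ([ffun j => coord (vbasis fullv) j z *: (1:A)] : FT A n).
  rewrite /s {2}(coord_vbasis (memvf z)); apply: eq_bigr => j _.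
  by rewrite ffunE ractZr ract1.
have idh : is_hom (id : Z -> Z) by [].
have [l [hl sl]] := projZ (freemod A n) Z s id hs ssurj idh.
pose hd := cdif_hom F (i + 1).
pose K := kermod hd.
pose h : K -> Z := fun u => g (vsval u).
have hh : is_hom h.
  split.
    move=> c x y; rewrite /h linearP; apply: glin; exact: kerP.
  move=> x a; rewrite /h /= kractE; apply: gA; exact: kerP.
have [e [he eincl]] := injZ K (cobj F (i + 1)) vsval h (incl_hom hd) (@subvs_inj _ _ _) hh.
have geK : forall x, cdif x = 0 -> g x = e x.
  move=> x dx; have xU : x \in KU hd by rewrite memKU dx.
  by have := eincl (vsproj (KU hd) x); rewrite /h vsprojK.
move=> x dx; rewrite geK //.
have lex : l (e x) = 0.
  apply/ffunP => j; rewrite ffunE.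
  pose phi : cobj F (i + 1) -> regmod A := fun x => (l (e x)) j.
  have hphi : is_hom phi.
    split.
      by move=> c x1 y1; rewrite /phi (proj1 he) (proj1 hl) !ffunE.
    by move=> x1 a; rewrite /phi (proj2 he) (proj2 hl) /= ffunE.
  have phi0 : forall y, phi (cdif y) = 0.
    move=> y; rewrite /phi -geK ?cdif2 // gim (hom0 hl) ffunE //.
  have [psi [hpsi Epsi]] := Hpos i hi phi hphi phi0.
  by have := Epsi x; rewrite /phi dx (hom0 hpsi).
by rewrite -[e x]sl lex (hom0 hs).
Qed.
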